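(* Let $f:U\to\mathbb{R}^3$ be a Guichard net and $\hat f$ an associated system of $f$ given by $d\hat f=\sum_{m=1}^3h_m\partial_mf\,dx_m$. Then, for each $i\in\{1,2,3\}$, the coordinate surfaces $x_i=\mathrm{const}$ of $f$ are totally umbilic if and only if $\partial_ih_i=0$.
   Context: $U\subset\mathbb{R}^3$ open connected, coordinates $(x_1,x_2,x_3)=(x,y,z)$, $\partial_i=\partial_{x_i}$. A triply orthogonal system is $f:U\to\mathbb{R}^3$ with $\det(\partial_1f,\partial_2f,\partial_3f)\ne0$ and $(\partial_if,\partial_jf)=0$ for $i\ne j$. For $(i,j,k)$ cyclic, $N_i=\partial_jf\times\partial_kf/|\cdot|$, Lamé coefficients $H_i$ by $\partial_if=H_iN_i$, rotational coefficients $\beta_{ij}=\frac1{H_i}\partial_iH_j$, and $\kappa_{ij}=-\beta_{ij}/H_j$ (principal curvature of $x_i=\mathrm{const}$ along $x_j$-lines); the surfaces $x_i=\mathrm{const}$ are totally umbilic if $\kappa_{ij}=\kappa_{ik}$. A Guichard net satisfies $H_1^2+H_2^2-H_3^2=0$. Its associated systems are $\hat f$ with $d\hat f=\sum h_m\partial_mf\,dx_m$, where $(h_1,h_2,h_3)$ solves $\partial_xh_3=-\frac{H_2}{H_3}\kappa_{13}$, $\partial_yh_3=\frac{H_1}{H_3}\kappa_{23}$, $\partial_zh_3=-\frac{H_1H_2}{H_3^2}(\kappa_{31}-\kappa_{32})$, $h_1=h_3+\frac{H_2}{H_1H_3}$, $h_2=h_3-\frac{H_1}{H_2H_3}$. 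*)

(* Defs.v *)
From Stdlib Require Import Reals List.
From Coquelicot Require Import Coquelicot.
Open Scope R_scope.

Inductive idx := I1 | I2 | I3.
Definition nxt (i : idx) : idx :=
  match i with I1 => I2 | I2 => I3 | I3 => I1 end.

Definition R3 := (R * R * R)%type.
Definition crd (i : idx) (p : R3) : R :=
  match i with I1 => fst (fst p) | I2 => snd (fst p) | I3 => snd p end.
Definition upd (i : idx) (p : R3) (t : R) : R3 :=
  match i with
  | I1 => (t, snd (fst p), snd p)
  | I2 => (fst (fst p), t, snd p)
  | I3 => (fst (fst p), snd (fst p), t)
  end.

Definition dot (a b : R3) : R :=
  crd I1 a * crd I1 b + crd I2 a * crd I2 b + crd I3 a * crd I3 b.
Definition cross (a b : R3) : R3 :=
  (crd I2 a * crd I3 b - crd I3 a * crd I2 b,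
   crd I3 a * crd I1 b - crd I1 a * crd I3 b,
   crd I1 a * crd I2 b - crd I2 a * crd I1 b).
Definition scal (c : R) (a : R3) : R3 :=
  (c * crd I1 a, c * crd I2 a, c * crd I3 a).
Definition norm3 (a : R3) : R := sqrt (dot a a).
Definition det3 (a b c : R3) : R := dot a (cross b c).

Definition pdiff (i : idx) (g : R3 -> R) (p : R3) : Prop :=
  ex_derive (fun t => g (upd i p t)) (crd i p).
Definition pd (i : idx) (g : R3 -> R) (p : R3) : R :=
  Derive (fun t => g (upd i p t)) (crd i p).
Definition comp (F : R3 -> R3) (m : idx) : R3 -> R := fun q => crd m (F q).
Definition vpd (i : idx) (F : R3 -> R3) (p : R3) : R3 :=
  (pd i (comp F I1) p, pd i (comp F I2) p, pd i (comp F I3) p).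

Fixpoint iter_pd (l : list idx) (g : R3 -> R) : R3 -> R :=
  match l with nil => g | i :: l' => pd i (iter_pd l' g) end.
Definition smooth_on (U : R3 -> Prop) (g : R3 -> R) : Prop :=
  forall (l : list idx) (i : idx) (p : R3), U p -> pdiff i (iter_pd l g) p.
Definition vsmooth_on (U : R3 -> Prop) (F : R3 -> R3) : Prop :=
  forall m, smooth_on U (comp F m).

Definition open3 (U : R3 -> Prop) : Prop :=
  forall p, U p -> exists e, 0 < e /\
    forall q, (forall i, Rabs (crd i q - crd i p) < e) -> U q.
Definition connected3 (U : R3 -> Prop) : Prop :=
  (exists p, U p) /\
  forall A B : R3 -> Prop, open3 A -> open3 B ->
    (forall p, U p -> A p \/ B p) ->
    (forall p, U p -> ~ (A p /\ B p)) ->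
    (forall p, U p -> A p) \/ (forall p, U p -> B p).

Definition triply_orthogonal (U : R3 -> Prop) (f : R3 -> R3) : Prop :=
  vsmooth_on U f /\
  forall p, U p ->
    det3 (vpd I1 f p) (vpd I2 f p) (vpd I3 f p) <> 0 /\
    forall i j, i <> j -> dot (vpd i f p) (vpd j f p) = 0.

Definition Nvec (f : R3 -> R3) (i : idx) (p : R3) : R3 :=
  let c := cross (vpd (nxt i) f p) (vpd (nxt (nxt i)) f p) in
  scal (/ norm3 c) c.
(** Lamé coefficient H_i : the scalar with ∂_i f = H_i N_i
    (N_i is a unit vector parallel to ∂_i f, so H_i = (∂_i f, N_i)). *)
Definition Lame (f : R3 -> R3) (i : idx) (p : R3) : R :=
  dot (vpd i f p) (Nvec f i p).
Definition beta (f : R3 -> R3) (i j : idx) (p : R3) : R :=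
  / Lame f i p * pd i (Lame f j) p.
Definition kappa (f : R3 -> R3) (i j : idx) (p : R3) : R :=
  - beta f i j p / Lame f j p.

Definition totally_umbilic (U : R3 -> Prop) (f : R3 -> R3) (i : idx) : Prop :=
  forall p, U p -> kappa f i (nxt i) p = kappa f i (nxt (nxt i)) p.

Definition guichard_net (U : R3 -> Prop) (f : R3 -> R3) : Prop :=
  triply_orthogonal U f /\
  forall p, U p ->
    (Lame f I1 p)^2 + (Lame f I2 p)^2 - (Lame f I3 p)^2 = 0.

Definition hsel (h1 h2 h3 : R3 -> R) (m : idx) : R3 -> R :=
  match m with I1 => h1 | I2 => h2 | I3 => h3 end.

Definition associated_system (U : R3 -> Prop) (f fhat : R3 -> R3)
    (h1 h2 h3 : R3 -> R) : Prop :=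
  (forall m p, U p -> pdiff m h3 p) /\
  (forall m n p, U p -> pdiff m (comp fhat n) p) /\
  forall p, U p ->
    let H1 := Lame f I1 p in let H2 := Lame f I2 p in let H3 := Lame f I3 p in
    (forall m, vpd m fhat p = scal (hsel h1 h2 h3 m p) (vpd m f p)) /\
    pd I1 h3 p = - (H2 / H3) * kappa f I1 I3 p /\
    pd I2 h3 p = (H1 / H3) * kappa f I2 I3 p /\
    pd I3 h3 p = - (H1 * H2 / H3 ^ 2) * (kappa f I3 I1 p - kappa f I3 I2 p) /\
    h1 p = h3 p + H2 / (H1 * H3) /\
    h2 p = h3 p - H1 / (H2 * H3).

(* Main.v *)
Require Import Defs.
From Stdlib Require Import Reals Lra.
From Coquelicot Require Import Coquelicot.
Open Scope R_scope.

Lemma upd_crd i p : upd i p (crd i p) = p.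
Proof. destruct p as [[a b] c]; destruct i; reflexivity. Qed.

Lemma line_loc U i p : open3 U -> U p -> locally (crd i p) (fun t => U (upd i p t)).
Proof.
  intros HU Hp. destruct (HU p Hp) as [e [He H]].
  exists (mkposreal e He). intros t Ht.
  unfold ball in Ht; simpl in Ht; unfold AbsRing_ball, abs, minus, plus, opp in Ht; simpl in Ht.
  apply H. intros k.
  destruct p as [[a b] c]; destruct i, k; simpl in *;
    try (replace (_ - _) with 0 by ring; rewrite Rabs_R0; lra); exact Ht.
Qed.

Lemma crd_vpd j f q m : crd m (vpd j f q) = pd j (Defs.comp f m) q.
Proof. destruct m; reflexivity. Qed.

Lemma det_cyc j a1 a2 a3 :
  let s := fun k => match k with I1 => a1 | I2 => a2 | I3 => a3 end in
  dot (s j) (cross (s (nxt j)) (s (nxt (nxt j)))) = det3 a1 a2 a3.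
Proof.
  destruct a1 as [[x1 y1] z1], a2 as [[x2 y2] z2], a3 as [[x3 y3] z3].
  destruct j; unfold det3, dot, cross; simpl; ring.
Qed.

Lemma cross_pos a c : dot a c <> 0 -> 0 < dot c c.
Proof.
  destruct a as [[x1 y1] z1], c as [[x2 y2] z2]; unfold dot; simpl. intros H.
  destruct (Rlt_dec 0 (x2*x2+y2*y2+z2*z2)) as [h|h]; auto.
  exfalso. apply H.
  assert (x2 = 0) by nra. assert (y2 = 0) by nra. assert (z2 = 0) by nra.
  subst; ring.
Qed.

Lemma lame_val a c :
  dot a (Defs.scal (/ norm3 c) c) = dot a c / sqrt (dot c c).
Proof.
  destruct a as [[x1 y1] z1], c as [[x2 y2] z2]; unfold norm3, dot, Defs.scal; simpl.
  unfold Rdiv; ring.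
Qed.


Lemma aux_dot (A1 A2 A3 C1 C2 C3 : R -> R) x :
  ex_derive A1 x -> ex_derive A2 x -> ex_derive A3 x ->
  ex_derive C1 x -> ex_derive C2 x -> ex_derive C3 x ->
  ex_derive (fun t => A1 t * C1 t + A2 t * C2 t + A3 t * C3 t) x.
Proof. intros. auto_derive. tauto. Qed.

Lemma aux_cr (A2 A3 C2 C3 : R -> R) x :
  ex_derive A2 x -> ex_derive A3 x -> ex_derive C2 x -> ex_derive C3 x ->
  ex_derive (fun t => A2 t * C3 t - A3 t * C2 t) x.
Proof. intros. auto_derive. tauto. Qed.

Lemma exd_dot (a c : R -> R3) x :
  (forall m, ex_derive (fun t => crd m (a t)) x) ->
  (forall m, ex_derive (fun t => crd m (c t)) x) ->
  ex_derive (fun t => dot (a t) (c t)) x.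
Proof.
  intros Ha Hc. unfold dot.
  exact (aux_dot (fun t => crd I1 (a t)) (fun t => crd I2 (a t)) (fun t => crd I3 (a t))
    (fun t => crd I1 (c t)) (fun t => crd I2 (c t)) (fun t => crd I3 (c t)) x
    (Ha I1) (Ha I2) (Ha I3) (Hc I1) (Hc I2) (Hc I3)).
Qed.

Lemma exd_cross (b c : R -> R3) x :
  (forall m, ex_derive (fun t => crd m (b t)) x) ->
  (forall m, ex_derive (fun t => crd m (c t)) x) ->
  forall m, ex_derive (fun t => crd m (cross (b t) (c t))) x.
Proof.
  intros Hb Hc m.
  destruct m.
  - exact (aux_cr (fun t => crd I2 (b t)) (fun t => crd I3 (b t)) (fun t => crd I2 (c t)) (fun t => crd I3 (c t)) x (Hb I2) (Hb I3) (Hc I2) (Hc I3)).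
  - exact (aux_cr (fun t => crd I3 (b t)) (fun t => crd I1 (b t)) (fun t => crd I3 (c t)) (fun t => crd I1 (c t)) x (Hb I3) (Hb I1) (Hc I3) (Hc I1)).
  - exact (aux_cr (fun t => crd I1 (b t)) (fun t => crd I2 (b t)) (fun t => crd I1 (c t)) (fun t => crd I2 (c t)) x (Hb I1) (Hb I2) (Hc I1) (Hc I2)).
Qed.

Lemma exd_divsqrt (u v : R -> R) x :
  ex_derive u x -> ex_derive v x -> 0 < v x ->
  ex_derive (fun t => u t / sqrt (v t)) x.
Proof.
  intros Hu Hv Hp. auto_derive. repeat split; auto.
  apply Rgt_not_eq, sqrt_lt_R0. lra.
Qed.

Lemma lame_ex (a b c : R -> R3) x :
  (forall m, ex_derive (fun t => crd m (a t)) x) ->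
  (forall m, ex_derive (fun t => crd m (b t)) x) ->
  (forall m, ex_derive (fun t => crd m (c t)) x) ->
  0 < dot (cross (b x) (c x)) (cross (b x) (c x)) ->
  ex_derive (fun t => dot (a t) (Defs.scal (/ norm3 (cross (b t) (c t))) (cross (b t) (c t)))) x.
Proof.
  intros Ha Hb Hc Hp.
  apply (ex_derive_ext (fun t => dot (a t) (cross (b t) (c t)) / sqrt (dot (cross (b t) (c t)) (cross (b t) (c t))))).
  { intros t. rewrite lame_val. reflexivity. }
  apply exd_divsqrt; auto.
  - apply exd_dot; auto. apply exd_cross; auto.
  - apply exd_dot; apply exd_cross; auto.
Qed.

Lemma det_cyc' f p j : dot (vpd j f p) (cross (vpd (nxt j) f p) (vpd (nxt (nxt j)) f p))
  = det3 (vpd I1 f p) (vpd I2 f p) (vpd I3 f p).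
Proof.
  destruct j; cbn [nxt]; generalize (vpd I1 f p) (vpd I2 f p) (vpd I3 f p);
  intros [[x1 y1] z1] [[x2 y2] z2] [[x3 y3] z3]; unfold det3, dot, cross; cbn [crd fst snd]; ring.
Qed.

Lemma lame_props U f p i j : vsmooth_on U f -> U p ->
  det3 (vpd I1 f p) (vpd I2 f p) (vpd I3 f p) <> 0 ->
  Lame f j p <> 0 /\ ex_derive (fun t => Lame f j (upd i p t)) (crd i p).
Proof.
  intros Hs Hp Hd. rewrite <- (det_cyc' f p j) in Hd.
  pose proof (cross_pos _ _ Hd) as Hpos.
  split.
  - unfold Lame, Nvec; cbv zeta. rewrite lame_val.
    unfold Rdiv. apply Rmult_integral_contrapositive_currified; auto.
    apply Rinv_neq_0_compat, Rgt_not_eq, sqrt_lt_R0; auto.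
  - unfold Lame, Nvec; cbv zeta.
    assert (E : forall k m, ex_derive (fun t => crd m (vpd k f (upd i p t))) (crd i p)).
    { intros k m. apply (ex_derive_ext (fun t => pd k (Defs.comp f m) (upd i p t))).
      - intros t; rewrite crd_vpd; reflexivity.
      - exact (Hs m (cons k nil) i p Hp). }
    apply (lame_ex (fun t => vpd j f (upd i p t)) (fun t => vpd (nxt j) f (upd i p t))
             (fun t => vpd (nxt (nxt j)) f (upd i p t))); auto.
    rewrite upd_crd. exact Hpos.
Qed.

Lemma aux_g (A B C : R -> R) x : ex_derive A x -> ex_derive B x -> ex_derive C x ->
  locally x (fun t => A t ^ 2 + B t ^ 2 - C t ^ 2 = 0) ->
  A x * Derive A x + B x * Derive B x - C x * Derive C x = 0.
Proof.
  intros HA HB HC Hl.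
  pose (G := fun t : R => A t ^ 2 + B t ^ 2 - C t ^ 2).
  assert (D1 : is_derive G x
     (2 * A x * Derive A x + 2 * B x * Derive B x - 2 * C x * Derive C x)).
  { unfold G; auto_derive; [tauto|].
    change (fun x0 : R => A x0) with A; change (fun x0 : R => B x0) with B;
    change (fun x0 : R => C x0) with C. ring. }
  assert (D2 : Derive G x = 0).
  { rewrite (Derive_ext_loc G (fun _ => 0)); [apply Derive_const|]. exact Hl. }
  apply is_derive_unique in D1. rewrite D1 in D2. lra.
Qed.

Lemma aux_h1 (A B C D E : R -> R) x : ex_derive A x -> ex_derive B x -> ex_derive C x ->
  ex_derive D x -> A x <> 0 -> C x <> 0 ->
  locally x (fun t => E t = D t + B t / (A t * C t)) ->
  Derive E x = Derive D x + (Derive B x / (A x * C x) - B x * Derive A x / (A x ^ 2 * C x)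
                             - B x * Derive C x / (A x * C x ^ 2)).
Proof.
  intros HA HB HC HD HA0 HC0 Hl.
  rewrite (Derive_ext_loc _ _ _ Hl).
  apply is_derive_unique. auto_derive.
  { repeat split; auto; try (apply Rmult_integral_contrapositive_currified; auto). }
  change (fun x0 : R => A x0) with A; change (fun x0 : R => B x0) with B;
    change (fun x0 : R => C x0) with C; change (fun x0 : R => D x0) with D. field; auto.
Qed.

Lemma aux_h2 (A B C D E : R -> R) x : ex_derive A x -> ex_derive B x -> ex_derive C x ->
  ex_derive D x -> B x <> 0 -> C x <> 0 ->
  locally x (fun t => E t = D t - A t / (B t * C t)) ->
  Derive E x = Derive D x - (Derive A x / (B x * C x) - A x * Derive B x / (B x ^ 2 * C x)
                             - A x * Derive C x / (B x * C x ^ 2)).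
Proof.
  intros HA HB HC HD HB0 HC0 Hl.
  rewrite (Derive_ext_loc _ _ _ Hl).
  apply is_derive_unique. auto_derive.
  { repeat split; auto; try (apply Rmult_integral_contrapositive_currified; auto). }
  change (fun x0 : R => A x0) with A; change (fun x0 : R => B x0) with B;
    change (fun x0 : R => C x0) with C; change (fun x0 : R => D x0) with D. field; auto.
Qed.

Lemma div0 a b : b <> 0 -> (a / b = 0 <-> a = 0).
Proof.
  intros hb; split; intro h.
  - replace a with (a / b * b) by (field; auto). rewrite h; ring.
  - rewrite h; unfold Rdiv; ring.
Qed.

Lemma alg1 H1 H2 H3 d1 d2 d3 : H1 <> 0 -> H2 <> 0 -> H3 <> 0 ->
  H1 ^ 2 + H2 ^ 2 - H3 ^ 2 = 0 -> H1 * d1 + H2 * d2 - H3 * d3 = 0 ->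
  (-(/ H1 * d2) / H2 = -(/ H1 * d3) / H3 <->
   -(H2 / H3) * (-(/ H1 * d3) / H3) + (d2 / (H1 * H3) - H2 * d1 / (H1 ^ 2 * H3)
        - H2 * d3 / (H1 * H3 ^ 2)) = 0).
Proof.
  intros n1 n2 n3 g1 g2.
  assert (K : H3 * (H3 * d2 - H2 * d3) = H1 * (H1 * d2 - H2 * d1)).
  { transitivity (H1 * (H1 * d2 - H2 * d1) - d2 * (H1 ^ 2 + H2 ^ 2 - H3 ^ 2)
       + H2 * (H1 * d1 + H2 * d2 - H3 * d3)); [ring|]. rewrite g1, g2. ring. }
  assert (E1 : -(/ H1 * d2) / H2 - -(/ H1 * d3) / H3 = - (H3 * d2 - H2 * d3) / (H1 * H2 * H3))
    by (field; auto).
  assert (E2 : -(H2 / H3) * (-(/ H1 * d3) / H3) + (d2 / (H1 * H3) - H2 * d1 / (H1 ^ 2 * H3)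
        - H2 * d3 / (H1 * H3 ^ 2)) = (H1 * d2 - H2 * d1) / (H1 ^ 2 * H3)) by (field; auto).
  rewrite E2.
  assert (n123 : H1 * H2 * H3 <> 0) by (repeat apply Rmult_integral_contrapositive_currified; auto).
  assert (n113 : H1 ^ 2 * H3 <> 0) by (apply Rmult_integral_contrapositive_currified; auto; apply pow_nonzero; auto).
  rewrite div0 by auto.
  split; intro h.
  - assert (X : H3 * d2 - H2 * d3 = 0).
    { assert (Z : - (H3 * d2 - H2 * d3) = 0).
      { apply (div0 (- (H3 * d2 - H2 * d3)) _ n123). rewrite <- E1. lra. }
      lra. }
    rewrite X, Rmult_0_r in K.
    destruct (Rmult_integral _ _ (eq_sym K)); [contradiction|auto].
  - rewrite h, Rmult_0_r in K.
    destruct (Rmult_integral _ _ K) as [h'|h']; [contradiction|].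
    assert (- (H3 * d2 - H2 * d3) / (H1 * H2 * H3) = 0) by (rewrite h'; unfold Rdiv; ring).
    lra.
Qed.

Lemma iff_all (U : R3 -> Prop) (P Q : R3 -> Prop) :
  (forall p, U p -> (P p <-> Q p)) -> ((forall p, U p -> P p) <-> (forall p, U p -> Q p)).
Proof. intros H; split; intros K p hp; apply (H p hp); auto. Qed.

Theorem corollary4p6 (U : R3 -> Prop) (f fhat : R3 -> R3) (h1 h2 h3 : R3 -> R) :
  open3 U -> connected3 U ->
  guichard_net U f ->
  associated_system U f fhat h1 h2 h3 ->
  forall i : idx,
    totally_umbilic U f i <->
    (forall p, U p -> pd i (hsel h1 h2 h3 i) p = 0).
Proof.
  intros HU _ [[Hs Hto] Hgn] [Hh3 [_ Hp]] i.
  assert (Hdet : forall p, U p -> det3 (vpd I1 f p) (vpd I2 f p) (vpd I3 f p) <> 0)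
    by (intros p hp; apply (Hto p hp)).
  assert (LP : forall p j k, U p -> Lame f j p <> 0 /\
     ex_derive (fun t => Lame f j (upd k p t)) (crd k p))
    by (intros p j k hp; apply (lame_props U); auto).
  assert (GD : forall k p, U p ->
    Lame f I1 p * pd k (Lame f I1) p + Lame f I2 p * pd k (Lame f I2) p
      - Lame f I3 p * pd k (Lame f I3) p = 0).
  { intros k p hp.
    pose proof (aux_g (fun t => Lame f I1 (upd k p t)) (fun t => Lame f I2 (upd k p t))
       (fun t => Lame f I3 (upd k p t)) (crd k p)
       (proj2 (LP p I1 k hp)) (proj2 (LP p I2 k hp)) (proj2 (LP p I3 k hp))) as K.
    cbv beta in K. rewrite upd_crd in K. apply K.
    apply (filter_imp (fun t => U (upd k p t))); [|apply line_loc; auto].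
    intros t ht. apply (Hgn _ ht). }
  unfold totally_umbilic. apply iff_all. intros p hp.
  destruct (Hp p hp) as [_ [e1 [e2 [e3 [eh1 eh2]]]]].
  destruct (LP p I1 I1 hp) as [n1 _]. destruct (LP p I2 I1 hp) as [n2 _].
  destruct (LP p I3 I1 hp) as [n3 _].
  pose proof (Hgn p hp) as g1.
  destruct i; cbn [nxt hsel].
  - assert (Hd : pd I1 h1 p = pd I1 h3 p + (pd I1 (Lame f I2) p / (Lame f I1 p * Lame f I3 p)
        - Lame f I2 p * pd I1 (Lame f I1) p / (Lame f I1 p ^ 2 * Lame f I3 p)
        - Lame f I2 p * pd I1 (Lame f I3) p / (Lame f I1 p * Lame f I3 p ^ 2))).
    { assert (a1 : (fun t => Lame f I1 (upd I1 p t)) (crd I1 p) <> 0) by (cbv beta; rewrite upd_crd; auto).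
      assert (a3 : (fun t => Lame f I3 (upd I1 p t)) (crd I1 p) <> 0) by (cbv beta; rewrite upd_crd; auto).
      pose proof (aux_h1 (fun t => Lame f I1 (upd I1 p t)) (fun t => Lame f I2 (upd I1 p t))
       (fun t => Lame f I3 (upd I1 p t)) (fun t => h3 (upd I1 p t)) (fun t => h1 (upd I1 p t)) (crd I1 p)
       (proj2 (LP p I1 I1 hp)) (proj2 (LP p I2 I1 hp)) (proj2 (LP p I3 I1 hp)) (Hh3 I1 p hp) a1 a3) as K.
      cbv beta in K. rewrite upd_crd in K. apply K.
      apply (filter_imp (fun t => U (upd I1 p t))); [|apply line_loc; auto].
      intros t ht. destruct (Hp _ ht) as [_ [_ [_ [_ [q1 _]]]]]. exact q1. }
    rewrite Hd, e1. unfold kappa, beta.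
    apply alg1; auto; apply (GD I1 p hp).
  - assert (Hd : pd I2 h2 p = pd I2 h3 p - (pd I2 (Lame f I1) p / (Lame f I2 p * Lame f I3 p)
        - Lame f I1 p * pd I2 (Lame f I2) p / (Lame f I2 p ^ 2 * Lame f I3 p)
        - Lame f I1 p * pd I2 (Lame f I3) p / (Lame f I2 p * Lame f I3 p ^ 2))).
    { assert (a1 : (fun t => Lame f I2 (upd I2 p t)) (crd I2 p) <> 0) by (cbv beta; rewrite upd_crd; auto).
      assert (a3 : (fun t => Lame f I3 (upd I2 p t)) (crd I2 p) <> 0) by (cbv beta; rewrite upd_crd; auto).
      pose proof (aux_h2 (fun t => Lame f I1 (upd I2 p t)) (fun t => Lame f I2 (upd I2 p t))
       (fun t => Lame f I3 (upd I2 p t)) (fun t => h3 (upd I2 p t)) (fun t => h2 (upd I2 p t)) (crd I2 p)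
       (proj2 (LP p I1 I2 hp)) (proj2 (LP p I2 I2 hp)) (proj2 (LP p I3 I2 hp)) (Hh3 I2 p hp) a1 a3) as K.
      cbv beta in K. rewrite upd_crd in K. apply K.
      apply (filter_imp (fun t => U (upd I2 p t))); [|apply line_loc; auto].
      intros t ht. destruct (Hp _ ht) as [_ [_ [_ [_ [_ q2]]]]]. exact q2. }
    rewrite Hd, e2. unfold kappa, beta.
    assert (g1' : Lame f I2 p ^ 2 + Lame f I1 p ^ 2 - Lame f I3 p ^ 2 = 0) by lra.
    assert (g2' : Lame f I2 p * pd I2 (Lame f I2) p + Lame f I1 p * pd I2 (Lame f I1) p
       - Lame f I3 p * pd I2 (Lame f I3) p = 0) by (pose proof (GD I2 p hp); lra).
    pose proof (alg1 _ _ _ _ _ _ n2 n1 n3 g1' g2') as A.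
    match type of A with (?P <-> ?Q = 0) =>
      match goal with |- (_ <-> ?Z = 0) =>
        assert (EZ : Z = - Q) by (unfold Rdiv; ring) end end.
    rewrite EZ. split; intro h.
    + assert (h' : - (/ Lame f I2 p * pd I2 (Lame f I1) p) / Lame f I1 p =
                   - (/ Lame f I2 p * pd I2 (Lame f I3) p) / Lame f I3 p) by (symmetry; exact h).
      apply A in h'. lra.
    + symmetry. apply A. lra.
  - rewrite e3.
    assert (c0 : - (Lame f I1 p * Lame f I2 p / Lame f I3 p ^ 2) <> 0).
    { apply Ropp_neq_0_compat. unfold Rdiv.
      repeat apply Rmult_integral_contrapositive_currified; auto.
      apply Rinv_neq_0_compat, pow_nonzero; auto. }
    split; intro h.
    + rewrite h; ring.
    + apply Rmult_integral in h. destruct h as [h|h]; [contradiction|lra].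
Qed.
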